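(* Fix $\lambda\in[0,1]$. Suppose $(q_{i,j}^{(k)})_{i\ne j,\,k=\pm1}$ are real numbers with $q_{i,j}^{(k)}\in(0,1)$ for all indices, satisfying $$q_{i,j}^{(k)}=\lambda\Big[p_{i,j}^{(k)}+\sum_{m\neq i,j}p_{i,m}^{(k)}q_{m,j}^{(k)}+\sum_{m\neq i}p_{i,m}^{(-k)}q_{m,i}^{(-k)}q_{i,j}^{(k)}\Big]\quad\text{for all } i\ne j,\ k.$$ Then $q_{i,j}^{(k)}=R_{i,j}^{(k)}(\lambda)$ for all $i\neq j$, $k$.
   Context: Fix an integer $N\ge 3$. Let $\mathcal G_N$ be the groupoid with object set $\{1,\dots,N\}$ generated by arrows $A_{i,j}^{(k)}$, $i\neq j\in\{1,\dots,N\}$, $k\in\{-1,1\}$, with source $i$ and target $j$, subject to the relations $A_{i,j}^{(k)}A_{j,\ell}^{(k)}=A_{i,\ell}^{(k)}$ for all $i,j,\ell$, $k$, with the convention $A_{i,i}^{(k)}:=e_i$ (unit at object $i$). Let $\mathcal A$ be its arrow set. Let $\{W_n\}_{n\ge0}$ be the Markov chain on $\mathcal A$ with $P(W_{n+1}=y\mid W_n=x)=p_{i,j}^{(k)}$ if $x^{-1}y=A_{i,j}^{(k)}$ with $i\ne j$ and $0$ otherwise, where $p_{i,j}^{(k)}\in(0,1)$ and $\sum_{j\ne i}\sum_{k=\pm1}p_{i,j}^{(k)}=1$ for each $i$; $P_x,E_x$ denote law and expectation with $W_0=x$. For $x\in\mathcal A$ let $T(0,x)=\inf\{n\ge0:W_n=W_0x\}$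 (possibly $\infty$), and define $R_{i,j}^{(k)}(\lambda)=E_{e_i}[\lambda^{T(0,A_{i,j}^{(k)})}]=\sum_{n\ge0}P_{e_i}(T(0,A_{i,j}^{(k)})=n)\lambda^n$. *)

(* Defs.v *)
From Stdlib Require Import Reals List Arith Bool.
From Coquelicot Require Import Coquelicot.
Import ListNotations.
Open Scope R_scope.

(* Objects of the groupoid G_N: 0, ..., N-1 (relabelling of 1..N).
   Signs k in {-1,+1}: true = +1, false = -1; -k is negb k. *)

Definition fsum (n : nat) (f : nat -> R) : R :=
  fold_right Rplus 0 (map f (seq 0 n)).

(* Concrete model of the arrows of G_N with source s (reduced words):
   an arrow with source s is the reduced word
     A_{s,j1}^{(k1)} A_{j1,j2}^{(k2)} ... A_{j(m-1),jm}^{(km)}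
   with consecutive signs alternating and consecutive objects distinct.
   It is stored REVERSED as the list [(km,jm); ...; (k1,j1)].
   The empty list is the unit e_s. *)
Definition word := list (bool * nat).

Definition wend (s : nat) (w : word) : nat :=
  match w with [] => s | (_, j) :: _ => j end.

(* right multiplication  x |-> x * A_{t(x),j}^{(k)}  (with j <> t(x)) on
   reduced words, using A^{(k)}_{a,b} A^{(k)}_{b,c} = A^{(k)}_{a,c}
   and A^{(k)}_{a,a} = e_a. *)
Definition wstep (s : nat) (w : word) (k : bool) (j : nat) : word :=
  match w with
  | [] => [(k, j)]
  | (k', j') :: w' =>
      if Bool.eqb k' k then
        (if Nat.eqb (wend s w') j then w' else (k, j) :: w')
      else (k, j) :: w
  end.

Definition is_gen (w : word) (k : bool) (j : nat) : bool :=
  match w with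
  | [(k', j')] => Bool.eqb k k' && Nat.eqb j j'
  | _ => false
  end.

(* hitP N p s k j n w : probability, for the walk {W_n} started at the
   arrow w (source s) with transition probabilities p, that the first
   time n' >= 0 with W_{n'} = A_{s,j}^{(k)} equals n.  Defined by the
   first-step decomposition of the path-space law of the Markov chain:
   from an arrow with target i, the step by A_{i,j'}^{(k')} (j' <> i)
   has probability p i j' k'. *)
Fixpoint hitP (N : nat) (p : nat -> nat -> bool -> R) (s : nat) (k : bool)
    (j : nat) (n : nat) (w : word) : R :=
  match n with
  | O => if is_gen w k j then 1 else 0
  | S n' =>
      if is_gen w k j then 0 else
      let i := wend s w in
      fsum N (fun j' =>
        if Nat.eqb j' i then 0 else
        p i j' true  * hitP N p s k j n' (wstep s w true j') +
        p i j' false * hitP N p s k j n' (wstep s w false j'))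
  end.

Definition hitting_prob (N : nat) (p : nat -> nat -> bool -> R)
    (i j : nat) (k : bool) (n : nat) : R :=
  hitP N p i k j n [].

Definition R_gen_is (N : nat) (p : nat -> nat -> bool -> R)
    (i j : nat) (k : bool) (lam r : R) : Prop :=
  is_series (fun n => hitting_prob N p i j k n * lam ^ n) r.

Definition transition_probs (N : nat) (p : nat -> nat -> bool -> R) : Prop :=
  (forall i j k, (i < N)%nat -> (j < N)%nat -> i <> j ->
     0 < p i j k < 1) /\
  (forall i, (i < N)%nat ->
     fsum N (fun j => if Nat.eqb j i then 0 else p i j true + p i j false) = 1).

(* Main.v *)
Require Import Defs.
From Stdlib Require Import Reals List Arith Bool Lra Lia.
From Coquelicot Require Import Coquelicot.
Import ListNotations.
Open Scope R_scope.

Lemma fold_plus_acc (l : list R) (x : R) : fold_right Rplus x l = fold_right Rplus 0 l + x.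
Proof. induction l; simpl; [lra| rewrite IHl; lra]. Qed.

Lemma fsum_0 f : fsum 0 f = 0.
Proof. reflexivity. Qed.

Lemma fsum_S n f : fsum (S n) f = fsum n f + f n.
Proof. unfold fsum. rewrite seq_S, map_app, fold_right_app. simpl.
  rewrite fold_plus_acc. lra. Qed.

Lemma fsum_ext n f g : (forall m, (m < n)%nat -> f m = g m) -> fsum n f = fsum n g.
Proof. induction n; intros H; [reflexivity|]. rewrite !fsum_S, IHn, H; auto. Qed.

Lemma fsum_le n f g : (forall m, (m < n)%nat -> f m <= g m) -> fsum n f <= fsum n g.
Proof. induction n; intros H; [unfold fsum; simpl; lra|]. rewrite !fsum_S.
  pose proof (H n (Nat.lt_succ_diag_r n)). assert (fsum n f <= fsum n g) by (apply IHn; auto). lra. Qed.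

Lemma fsum_plus n f g : fsum n (fun m => f m + g m) = fsum n f + fsum n g.
Proof. induction n; [unfold fsum; simpl; lra|]. rewrite !fsum_S, IHn. lra. Qed.

Lemma fsum_scal n c f : fsum n (fun m => c * f m) = c * fsum n f.
Proof. induction n; [unfold fsum; simpl; lra|]. rewrite !fsum_S, IHn. lra. Qed.

Lemma fsum_pick n a g : (a < n)%nat ->
  fsum n g = g a + fsum n (fun m => if Nat.eqb m a then 0 else g m).
Proof. induction n; intros H; [lia|]. rewrite !fsum_S.
  destruct (Nat.eq_dec a n).
  - subst. rewrite Nat.eqb_refl.
    rewrite (fsum_ext n (fun m => if Nat.eqb m n then 0 else g m) g). lra.
    intros m Hm. destruct (Nat.eqb_spec m n); [lia|auto].
  - rewrite IHn by lia. destruct (Nat.eqb_spec n a); [lia|]. lra.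
Qed.

Lemma fsum_nonneg n f : (forall m, (m < n)%nat -> 0 <= f m) -> 0 <= fsum n f.
Proof. induction n; intros H; [unfold fsum; simpl; lra|]. rewrite fsum_S.
  pose proof (H n (Nat.lt_succ_diag_r n)). assert (0 <= fsum n f) by (apply IHn; auto). lra. Qed.

Lemma fsum_pos n f m0 : (forall m, (m < n)%nat -> 0 <= f m) -> (m0 < n)%nat -> 0 < f m0 -> 0 < fsum n f.
Proof. intros H Hm0 Hp. rewrite (fsum_pick n m0) by auto.
  assert (0 <= fsum n (fun m => if Nat.eqb m m0 then 0 else f m)).
  { apply fsum_nonneg. intros m Hm. destruct (Nat.eqb m m0); [lra|auto]. }
  lra.
Qed.
Definition letter := (bool * nat * nat)%type.

Definition cr (x : letter) (l : list letter) : list letter :=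
  let '(kk, a, b) := x in
  match l with
  | [] => if Nat.eqb a b then [] else [(kk, a, b)]
  | (k2, c, d) :: l' =>
      if Bool.eqb kk k2 then (if Nat.eqb a d then l' else (kk, a, d) :: l')
      else (if Nat.eqb a b then l else (kk, a, b) :: l)
  end.

Fixpoint uw (s : nat) (k : bool) (j : nat) (w : word) : list letter :=
  match w with
  | [] => [(k, s, j)]
  | (k', j') :: w' => cr (k', j', wend s w') (uw s k j w')
  end.

Fixpoint prodg (g : nat -> nat -> bool -> R) (l : list letter) : R :=
  match l with
  | [] => 1
  | (kk, a, b) :: l' => g a b kk * prodg g l'
  end.

Fixpoint good (N : nat) (a : nat) (l : list letter) : Prop :=
  (a < N)%nat /\
  match l with
  | [] => True
  | (kk, c, d) :: l' => c = a /\ c <> d /\ good N d l' /\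
      match l' with [] => True | (k2, _, _) :: _ => k2 <> kk end
  end.

Fixpoint red (N s : nat) (w : word) : Prop :=
  match w with
  | [] => True
  | (k', j') :: w' => (j' < N)%nat /\ j' <> wend s w' /\ red N s w' /\
      match w' with [] => True | (k'', _) :: _ => k'' <> k' end
  end.

Lemma wend_lt N s w : (s < N)%nat -> red N s w -> (wend s w < N)%nat.
Proof. destruct w as [|[? ?] ?]; simpl; tauto. Qed.

Ltac bsimpl :=
  repeat match goal with
  | |- context [Nat.eqb ?a ?b] => destruct (Nat.eqb_spec a b); subst
  | |- context [Bool.eqb ?a ?b] => destruct a, b; simpl
  end.

Lemma red_step N s w kk m : (s < N)%nat -> red N s w -> (m < N)%nat -> m <> wend s w ->
  red N s (wstep s w kk m).
Proof.
  intros Hs Hr Hm Hne. destruct w as [|[k' j'] w']; simpl in *.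
  - auto.
  - destruct Hr as (H1 & H2 & H3 & H4).
    destruct (Bool.eqb_spec k' kk).
    + subst. destruct (Nat.eqb_spec (wend s w') m). auto.
      simpl. repeat split; auto.
    + simpl. repeat split; auto.
Qed.

Lemma cr_good N kk a b l : (a < N)%nat -> good N b l -> good N a (cr (kk, a, b) l).
Proof.
  intros Ha Hg. destruct l as [|[[k2 c] d] l']; simpl in *.
  - destruct (Nat.eqb_spec a b); simpl; subst; intuition.
  - destruct Hg as (Hb & Hc & Hcd & Hg' & Halt). subst c.
    destruct (Bool.eqb_spec kk k2).
    + subst. destruct (Nat.eqb_spec a d).
      * subst. exact Hg'.
      * simpl. repeat split; auto.
    + destruct (Nat.eqb_spec a b).
      * subst. simpl. repeat split; auto.
      * simpl. repeat split; auto.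
Qed.

Lemma uw_good N s k j w : (s < N)%nat -> (j < N)%nat -> s <> j -> red N s w ->
  good N (wend s w) (uw s k j w).
Proof.
  intros Hs Hj Hsj. induction w as [|[k' j'] w' IH]; intros Hr; simpl.
  - repeat split; auto.
  - simpl in Hr. destruct Hr as (H1 & H2 & H3 & H4). apply cr_good; auto.
Qed.

Lemma cr_assoc N kk a c b l : good N b l ->
  cr (kk, a, c) (cr (kk, c, b) l) = cr (kk, a, b) l.
Proof.
  intros Hg. destruct l as [|[[k2 c2] d] l']; simpl in *.
  - destruct (Nat.eqb_spec c b); simpl.
    + subst. reflexivity.
    + rewrite eqb_reflx. reflexivity.
  - destruct Hg as (Hb & Hc & Hcd & Hg' & Halt). subst c2.
    destruct (Bool.eqb_spec kk k2).
    + subst. destruct (Nat.eqb_spec c d).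
      * subst. destruct l' as [|[[k3 c3] d3] l'']; simpl.
        -- reflexivity.
        -- destruct (Bool.eqb_spec k2 k3); [congruence|]. reflexivity.
      * simpl. rewrite eqb_reflx. reflexivity.
    + destruct (Nat.eqb_spec c b).
      * subst. simpl. destruct (Bool.eqb_spec kk k2); [congruence|]. reflexivity.
      * simpl. rewrite eqb_reflx. reflexivity.
Qed.

Lemma cr_id N kk a l : good N a l -> cr (kk, a, a) l = l.
Proof.
  intros Hg. destruct l as [|[[k2 c2] d] l']; simpl in *.
  - rewrite Nat.eqb_refl. reflexivity.
  - destruct Hg as (Hb & Hc & Hcd & Hg' & Halt). subst c2.
    destruct (Bool.eqb_spec kk k2).
    + subst. destruct (Nat.eqb_spec a d); [congruence|]. reflexivity.
    + rewrite Nat.eqb_refl. reflexivity.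
Qed.

Lemma uw_step N s k j w kk m : (s < N)%nat -> (j < N)%nat -> s <> j -> red N s w ->
  m <> wend s w ->
  uw s k j (wstep s w kk m) = cr (kk, m, wend s w) (uw s k j w).
Proof.
  intros Hs Hj Hsj Hr Hm. destruct w as [|[k' j'] w']; cbn [wstep uw wend].
  - reflexivity.
  - simpl in Hr. destruct Hr as (H1 & H2 & H3 & H4).
    pose proof (uw_good N s k j w' Hs Hj Hsj H3) as Hg.
    destruct (Bool.eqb_spec k' kk).
    + subst. rewrite (cr_assoc N) by exact Hg.
      destruct (Nat.eqb_spec (wend s w') m).
      * rewrite <- e. rewrite (cr_id N) by exact Hg. reflexivity.
      * cbn [uw]. reflexivity.
    + reflexivity.
Qed.

Definition hsign (k : bool) (w : word) : bool := match w with [] => k | (k', _) :: _ => k' end.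

Lemma uw_head N s k j w : red N s w -> s <> j -> is_gen w k j = false ->
  exists a rest, uw s k j w = (hsign k w, wend s w, a) :: rest.
Proof.
  intros Hr Hsj. induction w as [|[k' j'] w' IH]; intros Hgen.
  - simpl. eauto.
  - simpl in Hr. destruct Hr as (H1 & H2 & H3 & H4). simpl.
    destruct w' as [|[k'' j''] w''].
    + simpl in *. destruct (Bool.eqb_spec k' k).
      * subst. destruct (Nat.eqb_spec j' j).
        -- subst. rewrite eqb_reflx, Nat.eqb_refl in Hgen. discriminate.
        -- eauto.
      * destruct (Nat.eqb_spec j' s); [congruence|]. eauto.
    + destruct (is_gen ((k'', j'') :: w'') k j) eqn:Eg.
      * destruct w''; [|discriminate]. simpl in Eg.
        apply andb_true_iff in Eg. destruct Eg as [E1 E2].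
        apply eqb_prop in E1. apply Nat.eqb_eq in E2. subst.
        simpl. rewrite eqb_reflx, Nat.eqb_refl. simpl in H2.
        destruct (Nat.eqb_spec j' j''); [congruence|]. simpl. eauto.
      * destruct (IH H3 eq_refl) as (a & rest & E). rewrite E. simpl in *.
        destruct (Bool.eqb_spec k' k''); [congruence|].
        destruct (Nat.eqb_spec j' j''); [congruence|]. eauto.
Qed.

Definition Op (N : nat) (p : nat -> nat -> bool -> R) (s : nat) (h : word -> R) (w : word) : R :=
  fsum N (fun m => if Nat.eqb m (wend s w) then 0 else
     p (wend s w) m true * h (wstep s w true m) + p (wend s w) m false * h (wstep s w false m)).

Lemma hitP_S N p s k j n w : hitP N p s k j (S n) w =
  if is_gen w k j then 0 else Op N p s (hitP N p s k j n) w.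
Proof. reflexivity. Qed.

Definition Qg (N : nat) (p : nat -> nat -> bool -> R) (lam : R) (g : nat -> nat -> bool -> R)
   (i a : nat) (kk : bool) : R :=
  lam * (p i a kk
         + fsum N (fun m => if Nat.eqb m i || Nat.eqb m a then 0 else p i m kk * g m a kk)
         + fsum N (fun m => if Nat.eqb m i then 0 else p i m (negb kk) * g m i (negb kk) * g i a kk)).

Lemma Op_prod N p s k j lam g w kk0 a rest :
  (s < N)%nat -> (j < N)%nat -> s <> j -> red N s w ->
  uw s k j w = (kk0, wend s w, a) :: rest ->
  lam * Op N p s (fun x => prodg g (uw s k j x)) w = prodg g rest * Qg N p lam g (wend s w) a kk0.
Proof.
  intros Hs Hj Hsj Hr E.
  pose proof (uw_good N s k j w Hs Hj Hsj Hr) as Hg. rewrite E in Hg.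
  destruct Hg as (Hi & _ & Hia & Hg' & _).
  assert (Ha : (a < N)%nat) by (destruct rest as [|[[? ?] ?] ?]; apply Hg').
  set (i := wend s w) in *. set (P := prodg g rest).
  unfold Op. fold i.
  rewrite (fsum_ext N _ (fun m =>
     (if Nat.eqb m i then 0 else p i m kk0 * (if Nat.eqb m a then P else g m a kk0 * P))
   + (if Nat.eqb m i then 0 else p i m (negb kk0) * (g m i (negb kk0) * (g i a kk0 * P))))).
  2:{ intros m Hm. destruct (Nat.eqb_spec m i) as [->|Hmi]; [lra|].
      rewrite !(uw_step N s k j w) by auto. fold i. rewrite E.
      assert (Hc1 : forall b, b = kk0 -> prodg g (cr (b, m, i) ((kk0, i, a) :: rest)) =
                (if Nat.eqb m a then P else g m a kk0 * P)).
      { intros b ->. simpl. rewrite eqb_reflx. destruct (Nat.eqb m a); reflexivity. }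
      assert (Hc2 : forall b, b = negb kk0 -> prodg g (cr (b, m, i) ((kk0, i, a) :: rest)) =
                g m i (negb kk0) * (g i a kk0 * P)).
      { intros b ->. simpl. destruct kk0; simpl; destruct (Nat.eqb_spec m i); try congruence; reflexivity. }
      destruct kk0.
      - rewrite (Hc1 true), (Hc2 false) by reflexivity. simpl. ring.
      - rewrite (Hc1 false), (Hc2 true) by reflexivity. simpl. ring. }
  rewrite fsum_plus.
  rewrite (fsum_pick N a (fun m => if Nat.eqb m i then 0 else _)) by exact Ha.
  destruct (Nat.eqb_spec a i) as [|_]; [congruence|]. rewrite Nat.eqb_refl.
  rewrite (fsum_ext N (fun m => if Nat.eqb m a then 0 else _)
     (fun m => P * (if Nat.eqb m i || Nat.eqb m a then 0 else p i m kk0 * g m a kk0))).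
  2:{ intros m _. destruct (Nat.eqb m a) eqn:E1, (Nat.eqb m i) eqn:E2; simpl; ring. }
  rewrite (fsum_ext N (fun m => if Nat.eqb m i then 0 else p i m (negb kk0) * _)
     (fun m => P * (if Nat.eqb m i then 0 else p i m (negb kk0) * g m i (negb kk0) * g i a kk0))).
  2:{ intros m _. destruct (Nat.eqb m i); ring. }
  rewrite !fsum_scal. unfold Qg. ring.
Qed.

Lemma prodg_nonneg N g a l : good N a l ->
  (forall x y kk, (x < N)%nat -> (y < N)%nat -> x <> y -> 0 <= g x y kk) -> 0 <= prodg g l.
Proof.
  revert a. induction l as [|[[kk c] d] l' IH]; intros a Hg H; simpl; [lra|].
  destruct Hg as (Ha & Hc & Hcd & Hg' & _). subst c.
  apply Rmult_le_pos; [apply H; auto; destruct l' as [|[[? ?] ?] ?]; apply Hg'|].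
  eapply IH; eauto.
Qed.

Lemma prodg_le N g1 g2 a l : good N a l ->
  (forall x y kk, (x < N)%nat -> (y < N)%nat -> x <> y -> 0 <= g1 x y kk <= g2 x y kk) ->
  prodg g1 l <= prodg g2 l.
Proof.
  revert a. induction l as [|[[kk c] d] l' IH]; intros a Hg H; simpl; [lra|].
  destruct Hg as (Ha & Hc & Hcd & Hg' & _). subst c.
  assert (Hd : (d < N)%nat) by (destruct l' as [|[[? ?] ?] ?]; apply Hg').
  destruct (H a d kk Ha Hd Hcd).
  apply Rmult_le_compat; auto.
  - apply (prodg_nonneg N g1 d); auto. intros; apply H; auto.
  - eapply IH; eauto.
Qed.

Lemma Op_ext N p s h1 h2 w : (s < N)%nat -> red N s w ->
  (forall x, red N s x -> h1 x = h2 x) -> Op N p s h1 w = Op N p s h2 w.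
Proof.
  intros Hs Hr H. unfold Op. apply fsum_ext. intros m Hm.
  destruct (Nat.eqb_spec m (wend s w)); [reflexivity|].
  rewrite !H by (apply red_step; auto). reflexivity.
Qed.

Lemma Op_le N p s h1 h2 w : (s < N)%nat -> red N s w ->
  (forall i m kk, (i < N)%nat -> (m < N)%nat -> i <> m -> 0 <= p i m kk) ->
  (forall x, red N s x -> h1 x <= h2 x) -> Op N p s h1 w <= Op N p s h2 w.
Proof.
  intros Hs Hr Hp H. unfold Op. apply fsum_le. intros m Hm.
  destruct (Nat.eqb_spec m (wend s w)); [lra|].
  pose proof (wend_lt N s w Hs Hr).
  apply Rplus_le_compat; apply Rmult_le_compat_l; try (apply Hp; auto);
  apply H; apply red_step; auto.
Qed.

Lemma Op_plus N p s h1 h2 w :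
  Op N p s (fun x => h1 x + h2 x) w = Op N p s h1 w + Op N p s h2 w.
Proof.
  unfold Op. rewrite <- fsum_plus. apply fsum_ext. intros m _.
  destruct (Nat.eqb m (wend s w)); ring.
Qed.

Lemma Op_scal N p s c h w :
  Op N p s (fun x => c * h x) w = c * Op N p s h w.
Proof.
  unfold Op. rewrite <- fsum_scal. apply fsum_ext. intros m _.
  destruct (Nat.eqb m (wend s w)); ring.
Qed.

Lemma Op_sum N p s h n w :
  Op N p s (fun x => sum_f_R0 (fun t => h t x) n) w = sum_f_R0 (fun t => Op N p s (h t) w) n.
Proof.
  induction n; simpl. reflexivity.
  rewrite Op_plus, IHn. reflexivity.
Qed.

Lemma min_exists (A : Type) (l : list A) (g : A -> R) :
  (forall x, In x l -> 0 < g x) -> exists c, 0 < c /\ forall x, In x l -> c <= g x.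
Proof.
  induction l as [|x l IH]; intros H.
  - exists 1. split; [lra|]. intros x [].
  - destruct IH as (c & Hc & Hc'). { intros y Hy. apply H. right. auto. }
    exists (Rmin (g x) c). split.
    + apply Rmin_pos; auto. apply H; left; auto.
    + intros y [<-|Hy]. apply Rmin_l. eapply Rle_trans. apply Rmin_r. auto.
Qed.

Definition fhalf (q : nat -> nat -> bool -> R) := fun x y (b : bool) => (1 + q x y b) / 2.

Lemma delta_pos N p q lam i a kk : (3 <= N)%nat -> transition_probs N p -> 0 <= lam <= 1 ->
  (forall i j k, (i < N)%nat -> (j < N)%nat -> i <> j -> 0 < q i j k < 1) ->
  (forall i j k, (i < N)%nat -> (j < N)%nat -> i <> j -> q i j k = Qg N p lam q i j k) ->
  (i < N)%nat -> (a < N)%nat -> i <> a ->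
  0 < fhalf q i a kk - Qg N p lam (fhalf q) i a kk.
Proof.
  intros HN [Hp Hrow] Hlam Hq Hfix Hi Ha Hia.
  set (A := fsum N (fun m => if Nat.eqb m i || Nat.eqb m a then 0 else p i m kk)).
  set (Aq := fsum N (fun m => if Nat.eqb m i || Nat.eqb m a then 0 else p i m kk * q m a kk)).
  set (B := fsum N (fun m => if Nat.eqb m i then 0 else p i m (negb kk))).
  set (Bq := fsum N (fun m => if Nat.eqb m i then 0 else p i m (negb kk) * q m i (negb kk))).
  assert (E1 : q i a kk = lam * (p i a kk + Aq + Bq * q i a kk)).
  { rewrite (Hfix i a kk) at 1 by auto. unfold Qg. f_equal. f_equal.
    unfold Bq. rewrite Rmult_comm, <- fsum_scal. apply fsum_ext. intros m _.
    destruct (Nat.eqb m i); ring. }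
  assert (E2 : Qg N p lam (fhalf q) i a kk =
     lam * (p i a kk + (A + Aq)/2 + (B + Bq) * (1 + q i a kk) / 4)).
  { unfold Qg. f_equal.
    replace ((A + Aq)/2) with (/2 * A + /2 * Aq) by field.
    replace ((B + Bq) * (1 + q i a kk) / 4) with ((1 + q i a kk)/4 * B + (1 + q i a kk)/4 * Bq) by field.
    unfold A, Aq, B, Bq. rewrite <- !fsum_scal, <- !fsum_plus.
    rewrite Rplus_assoc, Rplus_assoc. f_equal. f_equal. 
    - apply fsum_ext. intros m _. unfold fhalf. destruct (Nat.eqb m i || Nat.eqb m a); field.
    - apply fsum_ext. intros m _. unfold fhalf. destruct (Nat.eqb m i); field. }
  assert (E3 : p i a kk + A + B = 1).
  { rewrite <- (Hrow i Hi).
    rewrite (fsum_ext N _ (fun m => (if Nat.eqb m i then 0 else p i m kk) + (if Nat.eqb m i then 0 else p i m (negb kk)))).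
    2:{ intros m _. destruct (Nat.eqb m i), kk; simpl; ring. }
    rewrite fsum_plus. rewrite (fsum_pick N a (fun m => if Nat.eqb m i then 0 else p i m kk)) by auto.
    destruct (Nat.eqb_spec a i); [congruence|].
    assert (A = fsum N (fun m => if Nat.eqb m a then 0 else if Nat.eqb m i then 0 else p i m kk)).
    { apply fsum_ext. intros m _. destruct (Nat.eqb m a), (Nat.eqb m i); reflexivity. }
    unfold B. lra. }
  assert (HBB : 0 < B - Bq).
  { assert (HD : B - Bq = fsum N (fun m => if Nat.eqb m i then 0 else p i m (negb kk) * (1 - q m i (negb kk)))).
    { unfold B, Bq. 
      match goal with |- fsum _ ?X - fsum _ ?Y = _ => replace (fsum N X - fsum N Y) with (fsum N X + -1 * fsum N Y) by ring end.
      rewrite <- fsum_scal, <- fsum_plus. apply fsum_ext. intros m _. destruct (Nat.eqb m i); ring. }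
    rewrite HD.
    apply fsum_pos with (m0 := if Nat.eqb i 0 then 1%nat else 0%nat).
    - intros m Hm. destruct (Nat.eqb_spec m i); [lra|].
      destruct (Hp i m (negb kk) Hi Hm (not_eq_sym n)). destruct (Hq m i (negb kk) Hm Hi n).
      apply Rmult_le_pos; lra.
    - destruct (Nat.eqb i 0); lia.
    - destruct (Nat.eqb_spec i 0) as [->|Hi0]; simpl.
      + destruct (Hp 0%nat 1%nat (negb kk)) as [? ?]; try lia. destruct (Hq 1%nat 0%nat (negb kk)); try lia.
        apply Rmult_lt_0_compat; lra.
      + destruct i; [congruence|]. simpl.
        destruct (Hp (S i) 0%nat (negb kk)) as [? ?]; try lia. destruct (Hq 0%nat (S i) (negb kk)); try lia.
        apply Rmult_lt_0_compat; lra. }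
  destruct (Hq i a kk Hi Ha Hia) as [Hq0 Hq1].
  assert (Hl0 : lam <> 0). { intros ->. lra. }
  rewrite E2. unfold fhalf.
  assert (fhalf_id : (1 + q i a kk) / 2 - lam * (p i a kk + (A + Aq) / 2 + (B + Bq) * (1 + q i a kk) / 4)
     = (1 - lam) / 2 + lam / 4 * (B - Bq) * (1 - q i a kk)).
  { assert (Hx : q i a kk - lam * (p i a kk + Aq + Bq * q i a kk) = 0) by (rewrite <- E1; ring).
    assert (Hy : 1 - (p i a kk + A + B) = 0) by (rewrite E3; ring).
    apply Rminus_diag_uniq.
    transitivity ((q i a kk - lam * (p i a kk + Aq + Bq * q i a kk))/2 + lam/2 * (1 - (p i a kk + A + B))).
    field. rewrite Hx, Hy. field. }
  rewrite fhalf_id.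
  assert (0 < lam / 4 * (B - Bq) * (1 - q i a kk)).
  { apply Rmult_lt_0_compat; [apply Rmult_lt_0_compat|]; lra. }
  lra.
Qed.

Fixpoint Ef (N : nat) (p : nat -> nat -> bool -> R) (s : nat) (k : bool) (j : nat)
   (V : word -> R) (lam : R) (n : nat) (w : word) : R :=
  if is_gen w k j then 0 else
  match n with
  | O => V w
  | S n' => lam * Op N p s (Ef N p s k j V lam n') w
  end.

Lemma Op_zero N p s w : Op N p s (fun _ => 0) w = 0.
Proof.
  unfold Op. rewrite (fsum_ext N _ (fun m => 0 * 0)). rewrite fsum_scal. ring.
  intros m _. destruct (Nat.eqb m (wend s w)); ring.
Qed.

Lemma Op_scal_r N p s c h w :
  Op N p s (fun x => h x * c) w = Op N p s h w * c.
Proof.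
  rewrite Rmult_comm, <- Op_scal. unfold Op. apply fsum_ext. intros m _.
  destruct (Nat.eqb m (wend s w)); ring.
Qed.

Lemma sum_zero n : sum_f_R0 (fun _ => 0) n = 0.
Proof. induction n; simpl; [reflexivity| rewrite IHn; ring]. Qed.

Lemma uw_gen s k j w : is_gen w k j = true -> uw s k j w = [].
Proof.
  destruct w as [|[k' j'] [|? ?]]; simpl; try discriminate.
  intros H. apply andb_true_iff in H. destruct H as [H1 H2].
  apply eqb_prop in H1. apply Nat.eqb_eq in H2. subst.
  rewrite eqb_reflx, Nat.eqb_refl. reflexivity.
Qed.

Theorem proposition5p6 (N : nat) (p : nat -> nat -> bool -> R)
  (q : nat -> nat -> bool -> R) (lam : R) :
  (3 <= N)%nat ->
  transition_probs N p ->
  0 <= lam <= 1 ->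
  (forall i j k, (i < N)%nat -> (j < N)%nat -> i <> j -> 0 < q i j k < 1) ->
  (forall i j k, (i < N)%nat -> (j < N)%nat -> i <> j ->
     q i j k =
       lam * (p i j k
              + fsum N (fun m => if Nat.eqb m i || Nat.eqb m j then 0
                                 else p i m k * q m j k)
              + fsum N (fun m => if Nat.eqb m i then 0
                                 else p i m (negb k) * q m i (negb k) * q i j k))) ->
  forall i j k, (i < N)%nat -> (j < N)%nat -> i <> j ->
    R_gen_is N p i j k lam (q i j k).
Proof.
  intros HN Htp Hlam Hq Hfix0 s j k Hs Hj Hsj.
  assert (Hfix : forall i a kk, (i < N)%nat -> (a < N)%nat -> i <> a -> q i a kk = Qg N p lam q i a kk).
  { intros; unfold Qg; apply Hfix0; auto. }
  assert (Hp0 : forall i m kk, (i < N)%nat -> (m < N)%nat -> i <> m -> 0 <= p i m kk).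
  { intros. destruct Htp as [Hp _]. destruct (Hp i m kk); auto; lra. }
  set (V := fun w => prodg q (uw s k j w)).
  set (U := fun w => prodg (fhalf q) (uw s k j w)).
  assert (Vnn : forall w, red N s w -> 0 <= V w).
  { intros w Hr. apply (prodg_nonneg N q (wend s w)). apply uw_good; auto.
    intros. destruct (Hq x y kk); auto; lra. }
  assert (Unn : forall w, red N s w -> 0 <= U w).
  { intros w Hr. apply (prodg_nonneg N _ (wend s w)). apply uw_good; auto.
    intros. unfold fhalf. destruct (Hq x y kk); auto; lra. }
  assert (VH : forall w, red N s w -> is_gen w k j = false -> lam * Op N p s V w = V w).
  { intros w Hr Hg. destruct (uw_head N s k j w Hr Hsj Hg) as (a & rest & E).
    unfold V. rewrite (Op_prod N p s k j lam q w _ a rest Hs Hj Hsj Hr E).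
    pose proof (uw_good N s k j w Hs Hj Hsj Hr) as Hgd. rewrite E in Hgd.
    destruct Hgd as (Hi & _ & Hia & Hg' & _).
    assert (Ha : (a < N)%nat) by (destruct rest as [|[[? ?] ?] ?]; apply Hg').
    rewrite E. simpl. rewrite <- Hfix by auto. ring. }
  destruct (min_exists _ (list_prod (list_prod (seq 0 N) (seq 0 N)) [true; false])
     (fun x => match x with ((i, a), kk) => if Nat.eqb i a then 1 else
        fhalf q i a kk - Qg N p lam (fhalf q) i a kk end)) as (c & Hc & Hcle).
  { intros [[i a] kk] Hin. apply in_prod_iff in Hin. destruct Hin as [Hin _].
    apply in_prod_iff in Hin. destruct Hin as [Hi Ha]. apply in_seq in Hi, Ha.
    destruct (Nat.eqb_spec i a); [lra|]. apply delta_pos; auto; lia. }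
  assert (Hc' : forall i a kk, (i < N)%nat -> (a < N)%nat -> i <> a ->
      c <= fhalf q i a kk - Qg N p lam (fhalf q) i a kk).
  { intros i a kk Hi Ha Hia. specialize (Hcle ((i, a), kk)).
    simpl in Hcle. destruct (Nat.eqb_spec i a); [congruence|]. apply Hcle.
    apply in_prod_iff. split; [apply in_prod_iff; split; apply in_seq; lia|].
    destruct kk; simpl; auto. }
  assert (UH : forall w, red N s w -> is_gen w k j = false -> lam * Op N p s U w + c * V w <= U w).
  { intros w Hr Hg. destruct (uw_head N s k j w Hr Hsj Hg) as (a & rest & E).
    unfold U. rewrite (Op_prod N p s k j lam (fhalf q) w _ a rest Hs Hj Hsj Hr E).
    pose proof (uw_good N s k j w Hs Hj Hsj Hr) as Hgd. rewrite E in Hgd.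
    destruct Hgd as (Hi & _ & Hia & Hg' & _).
    assert (Ha : (a < N)%nat) by (destruct rest as [|[[? ?] ?] ?]; apply Hg').
    unfold V. rewrite E. simpl.
    set (i := wend s w) in *.
    assert (HPq : 0 <= prodg q rest).
    { apply (prodg_nonneg N q a); auto. intros. destruct (Hq x y kk); auto; lra. }
    assert (HPle : prodg q rest <= prodg (fhalf q) rest).
    { apply (prodg_le N q (fhalf q) a); auto. intros. unfold fhalf. destruct (Hq x y kk); auto; lra. }
    pose proof (Hc' i a (hsign k w) Hi Ha Hia) as Hd.
    destruct (Hq i a (hsign k w) Hi Ha Hia) as [Hq0 Hq1].
    assert (c * (q i a (hsign k w) * prodg q rest) <= c * prodg (fhalf q) rest).
    { apply Rmult_le_compat_l; [lra|]. 
      apply Rle_trans with (1 * prodg q rest); [apply Rmult_le_compat_r; lra| lra]. }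
    assert (prodg (fhalf q) rest * (Qg N p lam (fhalf q) i a (hsign k w) + c) <=
            prodg (fhalf q) rest * fhalf q i a (hsign k w)).
    { apply Rmult_le_compat_l; lra. }
    lra. }
  set (E := Ef N p s k j V lam).
  assert (Enn : forall n w, red N s w -> 0 <= E n w).
  { induction n; intros w Hr; unfold E; simpl; destruct (is_gen w k j); try lra.
    - apply Vnn; auto.
    - apply Rmult_le_pos; [lra|]. rewrite <- (Op_zero N p s w).
      apply Op_le; auto. all: intros x Hx; apply IHn; auto. }
  assert (EleV : forall n w, red N s w -> E n w <= V w).
  { induction n; intros w Hr; unfold E; simpl; destruct (is_gen w k j) eqn:Hg; try (apply Vnn; auto); try lra.
    rewrite <- (VH w Hr Hg). apply Rmult_le_compat_l; [lra|].
    apply Op_le; auto. }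
  assert (Ebd : forall n w, red N s w -> c * INR n * E n w <= U w).
  { induction n; intros w Hr.
    - simpl. rewrite Rmult_0_r, Rmult_0_l. apply Unn; auto.
    - destruct (is_gen w k j) eqn:Hg.
      + unfold E; simpl; rewrite Hg. rewrite Rmult_0_r. apply Unn; auto.
      + assert (HE : E (S n) w = lam * Op N p s (E n) w) by (unfold E; simpl; rewrite Hg; reflexivity).
        assert (Hs1 : c * INR (S n) * E (S n) w = c * E (S n) w + lam * Op N p s (fun x => c * INR n * E n x) w).
        { rewrite Op_scal, S_INR, HE. ring. }
        rewrite Hs1.
        pose proof (EleV (S n) w Hr). pose proof (UH w Hr Hg).
        assert (Op N p s (fun x => c * INR n * E n x) w <= Op N p s U w) by (apply Op_le; auto).
        assert (lam * Op N p s (fun x => c * INR n * E n x) w <= lam * Op N p s U w)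
          by (apply Rmult_le_compat_l; lra).
        assert (c * E (S n) w <= c * V w) by (apply Rmult_le_compat_l; lra).
        lra. }
  assert (SE : forall n w, red N s w ->
     sum_f_R0 (fun t => hitP N p s k j t w * lam ^ t) n + E n w = V w).
  { induction n; intros w Hr.
    - simpl. unfold E; simpl. destruct (is_gen w k j) eqn:Hg.
      + unfold V. rewrite uw_gen by auto. simpl. ring.
      + ring.
    - rewrite decomp_sum by lia. simpl pred.
      destruct (is_gen w k j) eqn:Hg.
      + rewrite (sum_eq _ (fun _ => 0)).
        2:{ intros t _. rewrite hitP_S, Hg. ring. }
        rewrite sum_zero. unfold E; simpl; rewrite Hg. unfold V. rewrite uw_gen by auto. simpl. ring.
      + rewrite (sum_eq _ (fun t => Op N p s (fun x => hitP N p s k j t x * lam ^ t) w * lam)).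
        2:{ intros t _. rewrite hitP_S, Hg, Op_scal_r. simpl. ring. }
        rewrite <- scal_sum.
        assert (HE : E (S n) w = lam * Op N p s (E n) w) by (unfold E; simpl; rewrite Hg; reflexivity).
        rewrite HE. cbn [hitP]. rewrite Hg. rewrite Rmult_0_l, Rplus_0_l.
        rewrite <- (VH w Hr Hg).
        replace (lam * sum_f_R0 (fun t => Op N p s (fun x => hitP N p s k j t x * lam ^ t) w) n
                 + lam * Op N p s (E n) w)
           with (lam * Op N p s (fun x => sum_f_R0 (fun t => hitP N p s k j t x * lam ^ t) n + E n x) w).
        2:{ rewrite Op_plus, Op_sum. ring. }
        f_equal. apply Op_ext; auto. }
  unfold R_gen_is, hitting_prob. apply is_series_Reals. intros eps Heps.
  assert (HV0 : V [] = q s j k) by (unfold V; simpl; ring).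
  assert (HU0 : 0 <= U []) by (apply Unn; simpl; auto).
  destruct (archimed_cor1 (c * eps / (U [] + 1))) as (N0 & HN0 & HN0pos).
  { apply Rdiv_lt_0_compat; [apply Rmult_lt_0_compat|]; lra. }
  exists N0. intros n Hn.
  assert (Hr0 : red N s []) by (simpl; auto).
  pose proof (SE n [] Hr0) as Hse. pose proof (Ebd n [] Hr0) as Hbd. pose proof (Enn n [] Hr0) as Hnn.
  unfold Rdist. rewrite <- HV0.
  replace (sum_f_R0 (fun t => hitP N p s k j t [] * lam ^ t) n - V []) with (- E n []) by lra.
  rewrite Rabs_Ropp, Rabs_pos_eq by lra.
  assert (HINR0 : 0 < INR N0) by (apply lt_0_INR; lia).
  assert (HINR : INR N0 <= INR n) by (apply le_INR; lia).
  assert (H1 : U [] + 1 < c * eps * INR N0).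
  { apply Rmult_lt_compat_r with (r := INR N0) in HN0; auto.
    rewrite Rinv_l in HN0 by lra.
    apply Rmult_lt_compat_r with (r := U [] + 1) in HN0; [|lra].
    replace (c * eps / (U [] + 1) * INR N0 * (U [] + 1)) with (c * eps * INR N0) in HN0 by (field; lra).
    lra. }
  assert (H2 : c * eps * INR N0 <= c * eps * INR n).
  { apply Rmult_le_compat_l; [|lra]. apply Rmult_le_pos; lra. }
  destruct (Rlt_or_le (E n []) eps) as [Hlt|Hge]; auto.
  exfalso.
  assert (c * INR n * eps <= c * INR n * E n []).
  { apply Rmult_le_compat_l; [|lra]. apply Rmult_le_pos; [lra|]. lra. }
  lra.
Qed.
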